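(* Consider problem (P): minimize $g(x)$ subject to $q(x)\in\Theta$, under the standing assumptions below, and let $\bar x$ be a local minimizer of (P) at which MSCQ holds. Then for each $w\in\overline K$ and each $z\in\mathbb{R}^n$ with $$\nabla Q(\bar x)z+\langle w,\nabla^2Q(\bar x)w\rangle\in T^2_C\big(Q(\bar x),\nabla Q(\bar x)w\big),$$ one has $\nabla g(\bar x)z+\langle w,\nabla^2 g(\bar x)w\rangle\ge0$.
   Context: Standing assumptions: $g:\mathbb{R}^n\to\mathbb{R}$ and $q:\mathbb{R}^n\to\mathbb{R}^m$ are $C^2$; $\Theta\subset\mathbb{R}^m$ is nonempty closed convex; $\Gamma=\{x\mid q(x)\in\Theta\}$; $\bar x\in\Gamma$, $\bar y=q(\bar x)$. $\Theta$ is $C^2$-cone reducible at $\bar y$ to a pointed closed convex cone $C\subset\mathbb{R}^l$: there are a neighborhood $V$ of $\bar y$ and a $C^2$ map $h:V\to\mathbb{R}^l$ with $h(\bar y)=0$, $\nabla h(\bar y)$ surjective, and $\Theta\cap V=\{y\in V\mid h(y)\in C\}$. $Q:=h\circ q$ on $q^{-1}(V)$, and $\langle w,\nabla^2Q(\bar x)w\rangle$ denotes the vector $(w^T\nabla^2Q_j(\bar x)w)_{j=1}^l$. MSCQ (metric subregularity constraint qualification) at $\bar x$: there exist $\kappa>0$ and a neighborhood $U$ of $\bar x$ with $d(x;\Gamma)\le\kappa\,d(q(x);\Theta)$ for all $x\in U$. The critical cone is $\overline K=T_\Gamma(\bar x)\cap\{\nabla g(\bar x)\}^\perp$ with $T_\Gamma$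 the contingent cone. The outer second-order tangent set is $T^2_C(y,d)=\{v\mid \exists t_k\downarrow0:\ d(y+t_kd+\tfrac12t_k^2v;C)=o(t_k^2)\}$. *)

(* Defs.v *)
From mathcomp Require Import ssreflect ssrfun ssrbool eqtype ssrnat seq choice fintype.
From Stdlib Require Import Reals ClassicalEpsilon.
Open Scope R_scope.

Definition vec (n : nat) := 'I_n -> R.

Definition vsum {n} (f : 'I_n -> R) : R := foldr (fun i acc => f i + acc) 0 (enum 'I_n).
Definition dot {n} (x y : vec n) : R := vsum (fun i => x i * y i).
Definition vnorm {n} (x : vec n) : R := sqrt (dot x x).
Definition vadd {n} (x y : vec n) : vec n := fun i => x i + y i.
Definition vsub {n} (x y : vec n) : vec n := fun i => x i - y i.
Definition vscal {n} (t : R) (x : vec n) : vec n := fun i => t * x i.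
Definition vopp {n} (x : vec n) : vec n := fun i => - x i.

Definition mapply {m n} (A : 'I_m -> vec n) (x : vec n) : vec m := fun i => dot (A i) x.
Definition quad {n} (H : 'I_n -> vec n) (w : vec n) : R := dot w (mapply H w).

Definition is_open {n} (U : vec n -> Prop) : Prop :=
  forall x, U x -> exists eps, 0 < eps /\ forall y, vnorm (vsub y x) < eps -> U y.
Definition nbhd {n} (x : vec n) (U : vec n -> Prop) : Prop :=
  exists eps, 0 < eps /\ forall y, vnorm (vsub y x) < eps -> U y.
Definition is_closed {n} (S : vec n -> Prop) : Prop :=
  forall x, (forall eps, 0 < eps -> exists y, S y /\ vnorm (vsub x y) < eps) -> S x.
Definition is_convex {n} (S : vec n -> Prop) : Prop :=
  forall x y t, 0 <= t <= 1 -> S x -> S y -> S (vadd (vscal t x) (vscal (1 - t) y)).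
Definition is_cone {n} (S : vec n -> Prop) : Prop :=
  forall t x, 0 <= t -> S x -> S (vscal t x).
Definition is_pointed {n} (S : vec n -> Prop) : Prop :=
  forall x, S x -> S (vopp x) -> forall i, x i = 0.

Definition is_inf (E : R -> Prop) (r : R) : Prop :=
  (forall t, E t -> r <= t) /\ (forall s, (forall t, E t -> s <= t) -> s <= r).
Definition setdist {n} (S : vec n -> Prop) (x : vec n) : R :=
  epsilon (inhabits 0) (is_inf (fun t => exists y, S y /\ t = vnorm (vsub x y))).

Definition has_grad {n} (f : vec n -> R) (G : vec n) (x : vec n) : Prop :=
  forall eps, 0 < eps -> exists delta, 0 < delta /\
    forall hh : vec n, vnorm hh < delta ->
      Rabs (f (vadd x hh) - f x - dot G hh) <= eps * vnorm hh.
Definition cont_at {n} (f : vec n -> R) (x : vec n) : Prop :=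
  forall eps, 0 < eps -> exists delta, 0 < delta /\
    forall y, vnorm (vsub y x) < delta -> Rabs (f y - f x) < eps.

Definition C2_scalar_on {n} (U : vec n -> Prop) (f : vec n -> R)
    (Df : vec n -> vec n) (D2f : vec n -> 'I_n -> vec n) : Prop :=
  (forall x, U x -> has_grad f (Df x) x) /\
  (forall x a, U x -> has_grad (fun y => Df y a) (D2f x a) x) /\
  (forall x a b, U x -> cont_at (fun y => D2f y a b) x).

Definition C2_on {n m} (U : vec n -> Prop) (F : vec n -> vec m)
    (DF : vec n -> 'I_m -> vec n) (D2F : vec n -> 'I_m -> 'I_n -> vec n) : Prop :=
  forall i, C2_scalar_on U (fun x => F x i) (fun x => DF x i) (fun x => D2F x i).

Definition vcv {n} (u : nat -> vec n) (d : vec n) : Prop :=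
  Un_cv (fun k => vnorm (vsub (u k) d)) 0.

Definition contingent_cone {n} (S : vec n -> Prop) (x : vec n) (d : vec n) : Prop :=
  exists (t : nat -> R) (dk : nat -> vec n),
    (forall k, 0 < t k) /\ Un_cv t 0 /\ vcv dk d /\
    (forall k, S (vadd x (vscal (t k) (dk k)))).

Definition outer_second_tangent {n} (S : vec n -> Prop) (y d : vec n) (v : vec n) : Prop :=
  exists t : nat -> R,
    (forall k, 0 < t k) /\ Un_cv t 0 /\
    Un_cv (fun k => setdist S (vadd (vadd y (vscal (t k) d)) (vscal (/2 * (t k)^2) v)) / (t k)^2) 0.

(* Main.v *)
Require Import Defs.
From mathcomp Require Import ssreflect ssrfun ssrbool eqtype ssrnat seq choice fintype.
From Stdlib Require Import Reals ClassicalEpsilon Classical Lra Lia FunctionalExtensionality.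
Open Scope R_scope.
Set Warnings "-notation-overridden".

Definition lsum {T} (s : seq T) (f : T -> R) : R := foldr (fun i acc => f i + acc) 0 s.

Lemma vsum_lsum n (f : 'I_n -> R) : vsum f = lsum (enum 'I_n) f.
Proof. by []. Qed.

Section LS.
Variable T : Type.
Implicit Types (s : seq T) (f g : T -> R).
Lemma lsum_nil f : lsum [::] f = 0. Proof. by []. Qed.
Lemma lsum_cons a s f : lsum (a :: s) f = f a + lsum s f. Proof. by []. Qed.
Lemma lsum_add s f g : lsum s (fun i => f i + g i) = lsum s f + lsum s g.
Proof. elim: s => [|a s IH] /=; [lra| rewrite IH; lra]. Qed.
Lemma lsum_scal s c f : lsum s (fun i => c * f i) = c * lsum s f.
Proof. elim: s => [|a s IH] /=; [lra| rewrite IH; lra]. Qed.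
Lemma lsum_scalr s c f : lsum s (fun i => f i * c) = lsum s f * c.
Proof. elim: s => [|a s IH] /=; [lra| rewrite IH; lra]. Qed.
Lemma lsum_opp s f : lsum s (fun i => - f i) = - lsum s f.
Proof. elim: s => [|a s IH] /=; [lra| rewrite IH; lra]. Qed.
Lemma lsum_sub s f g : lsum s (fun i => f i - g i) = lsum s f - lsum s g.
Proof. elim: s => [|a s IH] /=; [lra| rewrite IH; lra]. Qed.
Lemma lsum_ext s f g : (forall i, f i = g i) -> lsum s f = lsum s g.
Proof. move=> H; elim: s => [|a s IH] /=; [lra| rewrite IH H; lra]. Qed.
Lemma lsum_le s f g : (forall i, f i <= g i) -> lsum s f <= lsum s g.
Proof. move=> H; elim: s => [|a s IH] /=; [lra| have := H a; lra]. Qed.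
Lemma lsum_ge0 s f : (forall i, 0 <= f i) -> 0 <= lsum s f.
Proof. move=> H; elim: s => [|a s IH] /=; [lra| have := H a; lra]. Qed.
Lemma lsum_abs s f : Rabs (lsum s f) <= lsum s (fun i => Rabs (f i)).
Proof.
elim: s => [|a s IH] /=; first by rewrite Rabs_R0; lra.
have := Rabs_triang (f a) (lsum s f); lra.
Qed.
Lemma lsum_const0 s : lsum s (fun _ => 0) = 0.
Proof. elim: s => [|a s IH] /=; lra. Qed.
Lemma lsum_eq0 s f : (forall i, f i = 0) -> lsum s f = 0.
Proof. move=> H; elim: s => [|a s IH] /=; [lra| rewrite IH H; lra]. Qed.
Lemma lsum_sq_le s f : (forall i, 0 <= f i) -> lsum s (fun i => f i * f i) <= lsum s f * lsum s f.
Proof.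
move=> H; elim: s => [|a s IH] /=; first lra.
have := H a; have := lsum_ge0 s f H; nra.
Qed.
End LS.
Arguments lsum_nil {T}.
Arguments lsum_cons {T}.
Arguments lsum_add {T}.
Arguments lsum_scal {T}.
Arguments lsum_scalr {T}.
Arguments lsum_opp {T}.
Arguments lsum_sub {T}.
Arguments lsum_ext {T}.
Arguments lsum_le {T}.
Arguments lsum_ge0 {T}.
Arguments lsum_abs {T}.
Arguments lsum_const0 {T}.
Arguments lsum_sq_le {T}.

Lemma lsum_swap {T U} (s : seq T) (t : seq U) (F : T -> U -> R) :
  lsum s (fun i => lsum t (fun j => F i j)) = lsum t (fun j => lsum s (fun i => F i j)).
Proof.
elim: s => [|a s IH]; first by rewrite /=; elim: t => //= b t <-; lra.
rewrite lsum_cons IH. by rewrite -lsum_add.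
Qed.

Lemma lsum_mem_le {T : eqType} (s : seq T) f i : (forall j, 0 <= f j) -> i \in s -> f i <= lsum s f.
Proof.
move=> H; elim: s => [|a s IH] //=.
rewrite in_cons => /orP [/eqP ->|Hi]; first by have := lsum_ge0 s f H; lra.
have := IH Hi; have := H a; lra.
Qed.

Lemma lsum_delta0 {T : eqType} (s : seq T) f i : i \notin s ->
  lsum s (fun j => f j * (if j == i then 1 else 0)) = 0.
Proof.
elim: s => [|a s IH] //= Hi.
rewrite in_cons negb_or in Hi; case/andP: Hi => Hai Hi.
rewrite eq_sym (negbTE Hai) IH //; lra.
Qed.

Lemma lsum_delta {T : eqType} (s : seq T) f i : uniq s -> i \in s ->
  lsum s (fun j => f j * (if j == i then 1 else 0)) = f i.
Proof.
elim: s => [|a s IH] //= /andP [Ha Hu].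
rewrite in_cons => /orP [/eqP Hai|Hi].
- subst a. rewrite eqxx lsum_delta0 //; lra.
- have Hne : (a == i) = false.
  { apply/negbTE; apply/eqP => E; subst a; by rewrite Hi in Ha. }
  rewrite Hne IH //; lra.
Qed.
Section Vec.
Context {n : nat}.
Implicit Types x y z : vec n.

Lemma dot_sym x y : dot x y = dot y x.
Proof. rewrite /dot /vsum; apply: lsum_ext => i; lra. Qed.
Lemma dot_addl x y z : dot (vadd x y) z = dot x z + dot y z.
Proof. rewrite /dot /vsum -lsum_add; apply: lsum_ext => i; rewrite /vadd; lra. Qed.
Lemma dot_addr x y z : dot z (vadd x y) = dot z x + dot z y.
Proof. rewrite /dot /vsum -lsum_add; apply: lsum_ext => i; rewrite /vadd; lra. Qed.
Lemma dot_subr x y z : dot z (vsub x y) = dot z x - dot z y.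
Proof. rewrite /dot /vsum -lsum_sub; apply: lsum_ext => i; rewrite /vsub; lra. Qed.
Lemma dot_subl x y z : dot (vsub x y) z = dot x z - dot y z.
Proof. rewrite /dot /vsum -lsum_sub; apply: lsum_ext => i; rewrite /vsub; lra. Qed.
Lemma dot_scall t x y : dot (vscal t x) y = t * dot x y.
Proof. rewrite /dot /vsum -lsum_scal; apply: lsum_ext => i; rewrite /vscal; lra. Qed.
Lemma dot_scalr t x y : dot y (vscal t x) = t * dot y x.
Proof. rewrite /dot /vsum -lsum_scal; apply: lsum_ext => i; rewrite /vscal; lra. Qed.
Lemma dot_self_ge0 x : 0 <= dot x x.
Proof. apply: lsum_ge0 => i; nra. Qed.
Lemma vnorm_ge0 x : 0 <= vnorm x.
Proof. apply: sqrt_pos. Qed.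
Lemma vnorm_sq x : vnorm x * vnorm x = dot x x.
Proof. rewrite /vnorm sqrt_sqrt //; apply: dot_self_ge0. Qed.
Lemma coord_le_vnorm x i : Rabs (x i) <= vnorm x.
Proof.
rewrite /vnorm -(sqrt_Rsqr_abs (x i)); apply: sqrt_le_1_alt.
rewrite /Rsqr /dot /vsum.
apply: (lsum_mem_le _ (fun j => x j * x j)); first by move=> j; nra.
by rewrite mem_enum.
Qed.
Lemma vnorm_le_l1 x : vnorm x <= vsum (fun i => Rabs (x i)).
Proof.
rewrite /vnorm.
have H0 : 0 <= vsum (fun i => Rabs (x i)) by apply: lsum_ge0 => i; apply: Rabs_pos.
rewrite -(sqrt_Rsqr _ H0); apply: sqrt_le_1_alt; rewrite /Rsqr.
apply: Rle_trans; last apply: (lsum_sq_le _ (fun i => Rabs (x i))); last by move=> i; apply: Rabs_pos.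
apply: Req_le; apply: lsum_ext => i.
rewrite -Rabs_mult Rabs_pos_eq //; nra.
Qed.
Lemma dot_zero_self x : dot x x = 0 -> forall i, x i = 0.
Proof.
move=> H i. have := coord_le_vnorm x i. rewrite /vnorm H sqrt_0.
have := Rabs_pos (x i) => ? ?.
case: (Req_dec (x i) 0) => // Hne; have := Rabs_pos_lt _ Hne; lra.
Qed.
Lemma cauchy_schwarz x y : Rabs (dot x y) <= vnorm x * vnorm y.
Proof.
have Hq : forall t, 0 <= dot x x - 2 * t * dot x y + t * t * dot y y.
{ move=> t. have := dot_self_ge0 (vsub x (vscal t y)).
  rewrite dot_subl !dot_subr !dot_scall !dot_scalr (dot_sym y x); lra. }
have Hsq : dot x y * dot x y <= dot x x * dot y y.
{ have Hy := dot_self_ge0 y.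
  case: (Req_dec (dot y y) 0) => Hyy.
  - have Hy0 := dot_zero_self y Hyy.
    have -> : dot x y = 0.
    { apply: lsum_eq0 => i; rewrite Hy0; lra. }
    have := dot_self_ge0 x; nra.
  - have Hpos : 0 < dot y y by lra.
    have := Hq (dot x y / dot y y).
    have E : dot x y / dot y y * (dot x y / dot y y) * dot y y = dot x y * dot x y / dot y y.
    { field; lra. }
    have E2 : 2 * (dot x y / dot y y) * dot x y = 2 * (dot x y * dot x y / dot y y).
    { field; lra. }
    rewrite E E2 => H.
    have H3 : dot x y * dot x y / dot y y <= dot x x by lra.
    have : dot x y * dot x y <= dot x x * dot y y.
    { apply (Rmult_le_compat_r (dot y y)) in H3; last lra.
      move: H3; have -> : dot x y * dot x y / dot y y * dot y y = dot x y * dot x y by field; lra.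
      done. }
    done. }
have Hn := vnorm_ge0 x; have Hm := vnorm_ge0 y.
have : Rabs (dot x y) * Rabs (dot x y) <= (vnorm x * vnorm y) * (vnorm x * vnorm y).
{ rewrite -Rabs_mult Rabs_pos_eq; last nra.
  have -> : vnorm x * vnorm y * (vnorm x * vnorm y) = (vnorm x * vnorm x) * (vnorm y * vnorm y) by ring.
  by rewrite !vnorm_sq. }
have Hb : 0 <= vnorm x * vnorm y by nra.
have Ha := Rabs_pos (dot x y).
move=> H; apply: Rnot_lt_le => Hc.
have : (vnorm x * vnorm y) * (vnorm x * vnorm y) < Rabs (dot x y) * Rabs (dot x y).
{ apply: Rle_lt_trans (Rmult_le_compat_l _ _ _ Hb (Rlt_le _ _ Hc)) _.
  apply: Rmult_lt_compat_r; lra. }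
lra.
Qed.
Lemma vnorm_triang x y : vnorm (vadd x y) <= vnorm x + vnorm y.
Proof.
have Hn := vnorm_ge0 x; have Hm := vnorm_ge0 y; have Hs := vnorm_ge0 (vadd x y).
have H : vnorm (vadd x y) * vnorm (vadd x y) <= (vnorm x + vnorm y) * (vnorm x + vnorm y).
{ rewrite vnorm_sq dot_addl !dot_addr (dot_sym y x).
  have := cauchy_schwarz x y; have := Rle_abs (dot x y).
  have := vnorm_sq x; have := vnorm_sq y; nra. }
nra.
Qed.
Lemma vnorm_scal t x : vnorm (vscal t x) = Rabs t * vnorm x.
Proof.
rewrite /vnorm dot_scall dot_scalr -Rmult_assoc -(sqrt_Rsqr_abs t) -sqrt_mult_alt.
- by rewrite /Rsqr.
- rewrite /Rsqr; nra.
Qed.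
Lemma vnorm_sub_sym x y : vnorm (vsub x y) = vnorm (vsub y x).
Proof.
rewrite /vnorm; congr sqrt; rewrite /dot /vsum; apply: lsum_ext => i; rewrite /vsub; ring.
Qed.
Lemma vnorm_ext x y : (forall i, x i = y i) -> vnorm x = vnorm y.
Proof. move=> H; by rewrite (functional_extensionality _ _ H). Qed.
Lemma vnorm_triang_sub x y z : vnorm (vsub x z) <= vnorm (vsub x y) + vnorm (vsub y z).
Proof.
apply: Rle_trans (vnorm_triang (vsub x y) (vsub y z)).
apply: Req_le; apply: vnorm_ext => i; rewrite /vadd /vsub; ring.
Qed.
Lemma vnorm_zero : vnorm (fun _ : 'I_n => 0) = 0.
Proof.
rewrite /vnorm. have -> : dot (fun _ : 'I_n => 0) (fun _ => 0) = 0.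
{ apply: lsum_eq0 => i; ring. }
apply: sqrt_0.
Qed.
Lemma vnorm_opp x : vnorm (vopp x) = vnorm x.
Proof. rewrite /vnorm; congr sqrt; rewrite /dot /vsum; apply: lsum_ext => i; rewrite /vopp; ring. Qed.
End Vec.
Lemma inf_exists (E : R -> Prop) : (exists t, E t) -> (forall t, E t -> 0 <= t) ->
  exists r, is_inf E r.
Proof.
move=> [t0 Ht0] Hlb.
have Hb : bound (fun u => E (- u)).
{ exists 0 => u Hu; have := Hlb _ Hu; lra. }
have Hne : exists u, E (- u) by exists (- t0); rewrite Ropp_involutive.
case: (completeness _ Hb Hne) => m [Hm1 Hm2].
exists (- m); split.
- move=> t Ht. have : - t <= m by apply: Hm1; rewrite Ropp_involutive. lra.
- move=> s Hs. have : m <= - s.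
  { apply: Hm2 => u Hu; have := Hs _ Hu; lra. }
  lra.
Qed.

Section Dist.
Context {n : nat}.
Variable S : vec n -> Prop.
Hypothesis HS : exists y, S y.

Lemma setdist_inf x : is_inf (fun t => exists y, S y /\ t = vnorm (vsub x y)) (setdist S x).
Proof.
rewrite /setdist; apply: epsilon_spec.
apply: inf_exists.
- case: HS => y Hy; by exists (vnorm (vsub x y)), y.
- move=> t [y [_ ->]]; apply: vnorm_ge0.
Qed.

Lemma setdist_le x y : S y -> setdist S x <= vnorm (vsub x y).
Proof. move=> Hy; case: (setdist_inf x) => H _; apply: H; by exists y. Qed.

Lemma setdist_ge0 x : 0 <= setdist S x.
Proof.
case: (setdist_inf x) => _ H; apply: H => t [y [_ ->]]; apply: vnorm_ge0.
Qed.

Lemma setdist_approx x eps : 0 < eps -> exists y, S y /\ vnorm (vsub x y) < setdist S x + eps.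
Proof.
move=> He; apply: NNPP => Hn.
case: (setdist_inf x) => _ H.
have : setdist S x + eps <= setdist S x.
{ apply: H => t [y [Hy ->]]. apply: Rnot_lt_le => Hlt; apply: Hn; by exists y. }
lra.
Qed.

Lemma setdist_lip x x' : setdist S x <= setdist S x' + vnorm (vsub x x').
Proof.
case: (setdist_inf x') => _ H.
have : setdist S x - vnorm (vsub x x') <= setdist S x'.
{ apply: H => t [y [Hy ->]].
  have := setdist_le x y Hy; have := vnorm_triang_sub x x' y; lra. }
lra.
Qed.
End Dist.
Lemma lsum_const {T} (s : seq T) c : lsum s (fun _ => c) = INR (size s) * c.
Proof. elim: s => [|a s IH]; first by rewrite /=; lra. rewrite lsum_cons IH. change (size (a :: s)) with (S (size s)). rewrite S_INR; lra. Qed.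

Lemma fin_delta {T : eqType} (s : seq T) (P : T -> R -> Prop) :
  (forall a d d', 0 < d' <= d -> P a d -> P a d') ->
  (forall a, exists d, 0 < d /\ P a d) ->
  exists d, 0 < d /\ forall a, a \in s -> P a d.
Proof.
move=> Hm Hex; elim: s => [|a s [d [Hd IH]]]; first by exists 1; split; [lra|].
case: (Hex a) => da [Hda Pa].
exists (Rmin d da); split; first by apply: Rmin_pos.
move=> b; rewrite in_cons => /orP [/eqP ->|Hb].
- apply: Hm Pa; split; [by apply: Rmin_pos| apply: Rmin_r].
- apply: Hm (IH _ Hb); split; [by apply: Rmin_pos| apply: Rmin_l].
Qed.

Lemma fin_delta_ord k (P : 'I_k -> R -> Prop) :
  (forall a d d', 0 < d' <= d -> P a d -> P a d') ->
  (forall a, exists d, 0 < d /\ P a d) ->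
  exists d, 0 < d /\ forall a, P a d.
Proof.
move=> Hm Hex; case: (fin_delta (enum 'I_k) P Hm Hex) => d [Hd H].
exists d; split => // a; apply: H; by rewrite mem_enum.
Qed.

Lemma fin_N_ord k (P : 'I_k -> nat -> Prop) :
  (forall a, exists N, forall j, (N <= j)%coq_nat -> P a j) ->
  exists N, forall a j, (N <= j)%coq_nat -> P a j.
Proof.
move=> Hex.
have : exists N, forall a, a \in enum 'I_k -> forall j, (N <= j)%coq_nat -> P a j.
{ elim: (enum 'I_k) => [|a s [N IH]]; first by exists 0%nat.
  case: (Hex a) => Na Ha; exists (Nat.max N Na) => b; rewrite in_cons => /orP [/eqP ->|Hb] j Hj.
  - apply: Ha; lia.
  - apply: IH => //; lia. }
case=> N H; exists N => a j Hj; apply: H => //; by rewrite mem_enum.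
Qed.

Section Calc.
Context {n : nat}.
Implicit Types x y s : vec n.

Lemma has_grad_cont (f : vec n -> R) G x : has_grad f G x -> cont_at f x.
Proof.
move=> H eps He.
case: (H 1 Rlt_0_1) => d [Hd Hf].
exists (Rmin d (eps / (vnorm G + 2))); split.
{ apply: Rmin_pos => //; apply: Rdiv_lt_0_compat => //; have := vnorm_ge0 G; lra. }
move=> y Hy.
have Hy1 : vnorm (vsub y x) < d by apply: Rlt_le_trans Hy (Rmin_l _ _).
have Hy2 : vnorm (vsub y x) < eps / (vnorm G + 2) by apply: Rlt_le_trans Hy (Rmin_r _ _).
have E : vadd x (vsub y x) = y by apply: functional_extensionality => i; rewrite /vadd /vsub; ring.
have := Hf _ Hy1; rewrite E => Hb.
have := cauchy_schwarz G (vsub y x).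
have HG := vnorm_ge0 G; have Hn := vnorm_ge0 (vsub y x).
have : vnorm (vsub y x) * (vnorm G + 2) < eps.
{ have Hp : 0 < vnorm G + 2 by lra.
  move: Hy2; rewrite /Rdiv => Hy2.
  apply (Rmult_lt_compat_r (vnorm G + 2)) in Hy2 => //.
  move: Hy2; rewrite Rmult_assoc Rinv_l; lra. }
move=> H1 H2.
have := Rabs_triang (f y - f x - dot G (vsub y x)) (dot G (vsub y x)).
have -> : f y - f x - dot G (vsub y x) + dot G (vsub y x) = f y - f x by ring.
have := Rle_abs (dot G (vsub y x)). nra.
Qed.

Lemma line_deriv (f : vec n -> R) G y s t :
  has_grad f G (vadd y (vscal t s)) ->
  derivable_pt_lim (fun t => f (vadd y (vscal t s))) t (dot G s).
Proof.
move=> H eps He.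
set p := vadd y (vscal t s).
have Hs := vnorm_ge0 s.
have Hp : 0 < 2 * (vnorm s + 1) by lra.
case: (H (eps / (2 * (vnorm s + 1)))) => [|d [Hd Hf]].
{ by apply: Rdiv_lt_0_compat. }
have Hdd : 0 < d / (vnorm s + 1) by apply: Rdiv_lt_0_compat; lra.
exists (mkposreal _ Hdd) => h Hh0 Hh /=.
have E : vadd y (vscal (t + h) s) = vadd p (vscal h s).
{ apply: functional_extensionality => i; rewrite /p /vadd /vscal; ring. }
rewrite E.
have Hn : vnorm (vscal h s) < d.
{ rewrite vnorm_scal. move: Hh => /= Hh.
  have Ha := Rabs_pos h.
  have : Rabs h * (vnorm s + 1) < d.
  { apply (Rmult_lt_compat_r (vnorm s + 1)) in Hh; last lra.
    move: Hh; rewrite /Rdiv Rmult_assoc Rinv_l; lra. }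
  nra. }
have := Hf _ Hn; rewrite dot_scalr vnorm_scal => Hb.
have Ha : 0 < Rabs h by apply: Rabs_pos_lt.
have -> : (f (vadd p (vscal h s)) - f p) / h - dot G s
   = (f (vadd p (vscal h s)) - f p - h * dot G s) / h by field.
rewrite /Rdiv Rabs_mult Rabs_inv.
apply: (Rle_lt_trans _ (eps / (2 * (vnorm s + 1)) * vnorm s)).
- rewrite /Rdiv. apply (Rmult_le_reg_r (Rabs h)) => //.
  rewrite Rmult_assoc Rinv_l; last lra.
  move: Hb. have -> : eps * / (2 * (vnorm s + 1)) * (Rabs h * vnorm s) = eps * / (2 * (vnorm s + 1)) * vnorm s * Rabs h by ring.
  rewrite Rmult_1_r /p; lra.
- have -> : eps / (2 * (vnorm s + 1)) * vnorm s = eps * (vnorm s / (2 * (vnorm s + 1))) by field; lra.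
  have : vnorm s / (2 * (vnorm s + 1)) < 1.
  { apply (Rmult_lt_reg_r (2 * (vnorm s + 1))) => //.
    rewrite /Rdiv Rmult_assoc Rinv_l; lra. }
  have : 0 <= vnorm s / (2 * (vnorm s + 1)) by rewrite /Rdiv; apply: Rle_mult_inv_pos; lra.
  nra.
Qed.

Lemma poly2_deriv A B c : derivable_pt_lim (fun t => t * A + / 2 * (t * t) * B) c (A + c * B).
Proof.
move=> eps He.
have Hd : 0 < eps / (Rabs B + 1) by apply: Rdiv_lt_0_compat; have := Rabs_pos B; lra.
exists (mkposreal _ Hd) => h Hh0 /= Hh.
have -> : ((c + h) * A + / 2 * ((c + h) * (c + h)) * B - (c * A + / 2 * (c * c) * B)) / h - (A + c * B)
  = / 2 * h * B by field.
rewrite !Rabs_mult Rabs_inv Rabs_pos_eq; last lra.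
have HB := Rabs_pos B; have Ha := Rabs_pos h.
have : Rabs h * (Rabs B + 1) < eps.
{ apply (Rmult_lt_compat_r (Rabs B + 1)) in Hh; last lra.
  move: Hh; rewrite /Rdiv Rmult_assoc Rinv_l; lra. }
nra.
Qed.

Lemma taylor2 (f : vec n -> R) (Df : vec n -> vec n) (H : 'I_n -> vec n) y0 rho :
  0 < rho ->
  (forall y, vnorm (vsub y y0) < rho -> has_grad f (Df y) y) ->
  (forall a, has_grad (fun y => Df y a) (H a) y0) ->
  forall eps, 0 < eps -> exists d, 0 < d /\ forall s, vnorm s < d ->
    Rabs (f (vadd y0 s) - f y0 - dot (Df y0) s - / 2 * quad H s) <= eps * (vnorm s * vnorm s).
Proof.
move=> Hrho Hg HH eps He.
set e' := eps / (INR n + 1).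
have Hn0 := pos_INR n.
have He' : 0 < e' by apply: Rdiv_lt_0_compat; lra.
case: (fin_delta_ord n (fun a d => forall hh : vec n, vnorm hh < d ->
      Rabs (Df (vadd y0 hh) a - Df y0 a - dot (H a) hh) <= e' * vnorm hh)).
- move=> a d d' Hd P hh Hh; apply: P; lra.
- move=> a; exact: (HH a e' He').
move=> d1 [Hd1 Hd1P].
exists (Rmin rho d1); split; first by apply: Rmin_pos.
move=> s Hs.
have Hs1 : vnorm s < rho by apply: Rlt_le_trans Hs (Rmin_l _ _).
have Hs2 : vnorm s < d1 by apply: Rlt_le_trans Hs (Rmin_r _ _).
set A := dot (Df y0) s. set B := quad H s.
set phi := fun t => f (vadd y0 (vscal t s)) - (t * A + / 2 * (t * t) * B).
set phi' := fun t => dot (Df (vadd y0 (vscal t s))) s - (A + t * B).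
have Hder : forall c, 0 <= c <= 1 -> derivable_pt_lim phi c (phi' c).
{ move=> c Hc. apply: (derivable_pt_lim_minus (fun t => f (vadd y0 (vscal t s)))
     (fun t => t * A + / 2 * (t * t) * B)); last by apply: poly2_deriv.
  apply: line_deriv; apply: Hg.
  have -> : vsub (vadd y0 (vscal c s)) y0 = vscal c s.
  { apply: functional_extensionality => i; rewrite /vsub /vadd /vscal; ring. }
  rewrite vnorm_scal Rabs_pos_eq; last lra.
  have := vnorm_ge0 s; nra. }
case: (MVT_cor2 phi phi' 0 1 Rlt_0_1 Hder) => c [Hmvt Hc].
have E0 : vadd y0 (vscal 0 s) = y0 by apply: functional_extensionality => i; rewrite /vadd /vscal; ring.
have E1 : vadd y0 (vscal 1 s) = vadd y0 s by apply: functional_extensionality => i; rewrite /vadd /vscal; ring.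
have -> : f (vadd y0 s) - f y0 - A - / 2 * B = phi 1 - phi 0.
{ rewrite /phi E0 E1; ring. }
rewrite Hmvt Rminus_0_r Rmult_1_r /phi'.
have Hsum : dot (Df (vadd y0 (vscal c s))) s - (A + c * B) =
   vsum (fun a => s a * (Df (vadd y0 (vscal c s)) a - Df y0 a - dot (H a) (vscal c s))).
{ have Hc2 : forall a, dot (H a) (vscal c s) = c * dot (H a) s by move=> a; apply: dot_scalr.
  transitivity (vsum (fun a => s a * (Df (vadd y0 (vscal c s)) a - Df y0 a - c * dot (H a) s))); last first.
  { apply: lsum_ext => a; by rewrite Hc2. }
  rewrite /A /B /quad /mapply /dot /vsum -lsum_scal -lsum_add -lsum_sub.
  apply: lsum_ext => a. ring. }
rewrite Hsum.
apply: Rle_trans (lsum_abs _ _) _.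
apply: Rle_trans (lsum_le _ _ (fun _ => vnorm s * (e' * vnorm s)) _) _.
- move=> a. rewrite Rabs_mult. apply: Rmult_le_compat; try apply: Rabs_pos.
  + apply: coord_le_vnorm.
  + have Hcs : vnorm (vscal c s) <= vnorm s.
    { rewrite vnorm_scal Rabs_pos_eq; last lra. have := vnorm_ge0 s; nra. }
    apply: Rle_trans (Hd1P a _ _) _; first lra.
    apply: Rmult_le_compat_l => //; lra.
- rewrite lsum_const size_enum_ord.
  have Hvs := vnorm_ge0 s.
  have -> : INR n * (vnorm s * (e' * vnorm s)) = (INR n * e') * (vnorm s * vnorm s) by ring.
  apply: Rmult_le_compat_r; first nra.
  rewrite /e' /Rdiv. apply (Rmult_le_reg_r (INR n + 1)); first lra.
  rewrite Rmult_assoc Rmult_assoc Rinv_l; last lra. nra.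
Qed.
End Calc.
Definition KH {n} (H : 'I_n -> vec n) : R := vsum (fun a => vsum (fun b => Rabs (H a b))).

Lemma KH_ge0 {n} (H : 'I_n -> vec n) : 0 <= KH H.
Proof. apply: lsum_ge0 => a; apply: lsum_ge0 => b; apply: Rabs_pos. Qed.

Lemma quad_eq {n} (H : 'I_n -> vec n) x :
  quad H x = vsum (fun a => vsum (fun b => H a b * (x a * x b))).
Proof.
rewrite /quad /dot /mapply. apply: lsum_ext => a. rewrite /dot -lsum_scal.
apply: lsum_ext => b; ring.
Qed.

Lemma quad_pert {n} (H : 'I_n -> vec n) t w u :
  Rabs (quad H (vadd (vscal t w) u) - t * t * quad H w) <=
  KH H * (2 * Rabs t * vnorm w * vnorm u + vnorm u * vnorm u).
Proof.
set M := 2 * Rabs t * vnorm w * vnorm u + vnorm u * vnorm u.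
rewrite !quad_eq /KH -lsum_scal -lsum_sub.
apply: Rle_trans (lsum_abs _ _) _.
rewrite -lsum_scalr; apply: lsum_le => a.
rewrite -lsum_scal -lsum_sub.
apply: Rle_trans (lsum_abs _ _) _.
rewrite -lsum_scalr; apply: lsum_le => b.
have -> : H a b * (vadd (vscal t w) u a * vadd (vscal t w) u b) - t * t * (H a b * (w a * w b))
   = H a b * (t * w a * u b + t * u a * w b + u a * u b).
{ rewrite /vadd /vscal; ring. }
rewrite Rabs_mult; apply: Rmult_le_compat_l; first apply: Rabs_pos.
have Ha := coord_le_vnorm w a; have Hb := coord_le_vnorm w b.
have Ua := coord_le_vnorm u a; have Ub := coord_le_vnorm u b.
apply: Rle_trans (Rabs_triang _ _) _.
apply: Rle_trans (Rplus_le_compat_r _ _ _ (Rabs_triang _ _)) _.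
rewrite !Rabs_mult.
have := Rabs_pos t; have := Rabs_pos (w a); have := Rabs_pos (w b);
have := Rabs_pos (u a); have := Rabs_pos (u b); rewrite /M.
move=> *.
have H1 : Rabs t * Rabs (w a) * Rabs (u b) <= Rabs t * vnorm w * vnorm u.
{ apply: Rmult_le_compat; try nra. }
have H2 : Rabs t * Rabs (u a) * Rabs (w b) <= Rabs t * vnorm w * vnorm u.
{ have -> : Rabs t * vnorm w * vnorm u = Rabs t * vnorm u * vnorm w by ring.
  apply: Rmult_le_compat; try nra. }
have H3 : Rabs (u a) * Rabs (u b) <= vnorm u * vnorm u.
{ apply: Rmult_le_compat; try nra. }
lra.
Qed.

Lemma mv_est {m} (f : vec m -> R) (Df : vec m -> vec m) yb rho :
  0 < rho ->
  (forall y, vnorm (vsub y yb) < rho -> has_grad f (Df y) y) ->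
  (forall c, cont_at (fun y => Df y c) yb) ->
  forall beta, 0 < beta -> exists r, 0 < r /\ r <= rho /\
    forall a b, vnorm (vsub a yb) < r -> vnorm (vsub b yb) < r ->
      Rabs (f a - f b - dot (Df yb) (vsub a b)) <= beta * vnorm (vsub a b).
Proof.
move=> Hrho Hg Hc beta Hb.
set b' := beta / (INR m + 1).
have Hm0 := pos_INR m.
have Hb' : 0 < b' by apply: Rdiv_lt_0_compat; lra.
case: (fin_delta_ord m (fun c d => forall y, vnorm (vsub y yb) < d -> Rabs (Df y c - Df yb c) < b')).
- move=> c d d' Hd P y Hy; apply: P; lra.
- move=> c; exact: (Hc c b' Hb').
move=> d [Hd HdP].
exists (Rmin rho d); split; first by apply: Rmin_pos.
split; first by apply: Rmin_l.
move=> a b Ha Hbb.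
have Hr1 : Rmin rho d <= rho := Rmin_l _ _.
have Hr2 : Rmin rho d <= d := Rmin_r _ _.
set v := vsub a b.
set psi := fun t => f (vadd b (vscal t v)) - t * dot (Df yb) v.
set psi' := fun t => dot (Df (vadd b (vscal t v))) v - dot (Df yb) v.
have Hin : forall t, 0 <= t <= 1 -> vnorm (vsub (vadd b (vscal t v)) yb) < Rmin rho d.
{ move=> t Ht.
  have -> : vsub (vadd b (vscal t v)) yb = vadd (vscal (1 - t) (vsub b yb)) (vscal t (vsub a yb)).
  { apply: functional_extensionality => i; rewrite /vsub /vadd /vscal /v /vsub; ring. }
  apply: Rle_lt_trans (vnorm_triang _ _) _.
  rewrite !vnorm_scal !Rabs_pos_eq; try lra.
  have := vnorm_ge0 (vsub b yb); have := vnorm_ge0 (vsub a yb).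
  case: (Req_dec t 0) => Ht0.
  - subst t; nra.
  - nra. }
have Hder : forall t, 0 <= t <= 1 -> derivable_pt_lim psi t (psi' t).
{ move=> t Ht. apply: (derivable_pt_lim_minus (fun t => f (vadd b (vscal t v)))
     (fun t => t * dot (Df yb) v)).
  - apply: line_deriv; apply: Hg. have := Hin t Ht; lra.
  - have := derivable_pt_lim_scal id (dot (Df yb) v) t 1 (derivable_pt_lim_id t).
    rewrite Rmult_1_r => H.
    move=> e He; case: (H e He) => dd Hdd; exists dd => hh H1 H2.
    have := Hdd hh H1 H2. rewrite /mult_real_fct /id.
    have -> : (t + hh) * dot (Df yb) v = dot (Df yb) v * (t + hh) by ring.
    have -> : t * dot (Df yb) v = dot (Df yb) v * t by ring. done. }
case: (MVT_cor2 psi psi' 0 1 Rlt_0_1 Hder) => c [Hmvt Hc01].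
have E0 : vadd b (vscal 0 v) = b by apply: functional_extensionality => i; rewrite /vadd /vscal; ring.
have E1 : vadd b (vscal 1 v) = a by apply: functional_extensionality => i; rewrite /vadd /vscal /v /vsub; ring.
have -> : f a - f b - dot (Df yb) v = psi 1 - psi 0 by rewrite /psi E0 E1; ring.
rewrite Hmvt Rminus_0_r Rmult_1_r /psi'.
have Hp := Hin c (conj (Rlt_le _ _ (proj1 Hc01)) (Rlt_le _ _ (proj2 Hc01))).
have -> : dot (Df (vadd b (vscal c v))) v - dot (Df yb) v
   = vsum (fun i => (Df (vadd b (vscal c v)) i - Df yb i) * v i).
{ rewrite /dot /vsum -lsum_sub; apply: lsum_ext => i; ring. }
apply: Rle_trans (lsum_abs _ _) _.
apply: Rle_trans (lsum_le _ _ (fun _ => b' * vnorm v) _) _.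
- move=> i; rewrite Rabs_mult; apply: Rmult_le_compat; try apply: Rabs_pos.
  + apply: Rlt_le; apply: HdP; lra.
  + apply: coord_le_vnorm.
- rewrite lsum_const size_enum_ord.
  have Hv := vnorm_ge0 v.
  rewrite -Rmult_assoc; apply: Rmult_le_compat_r => //.
  rewrite /b' /Rdiv. apply (Rmult_le_reg_r (INR m + 1)); first lra.
  rewrite Rmult_assoc Rmult_assoc Rinv_l; last lra. nra.
Qed.
Lemma div_lt_mul a b X : 0 < X -> a / X < b -> a < b * X.
Proof.
move=> HX H. apply (Rmult_lt_compat_r X) in H => //.
move: H. have -> : a / X * X = a by field; lra. done.
Qed.

Lemma lt_div_mul a b X : 0 < X -> a < b / X -> X * a < b.
Proof.
move=> HX H. apply (Rmult_lt_compat_l X) in H => //.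
move: H. have -> : X * (b / X) = b by field; lra. done.
Qed.

Lemma lim_bound (u : nat -> R) L a M N : Un_cv u L ->
  (forall p, (N <= p)%coq_nat -> Rabs (u p - a) <= M) -> Rabs (L - a) <= M.
Proof.
move=> Hu Hb; apply: Rnot_lt_le => Hlt.
case: (Hu (Rabs (L - a) - M)) => [|N1 HN1]; first lra.
have := HN1 (Nat.max N N1) ltac:(lia); rewrite /Rdist => H1.
have := Hb (Nat.max N N1) ltac:(lia) => H2.
have := Rabs_triang (u (Nat.max N N1) - a) (L - u (Nat.max N N1)).
have -> : u (Nat.max N N1) - a + (L - u (Nat.max N N1)) = L - a by ring.
rewrite (Rabs_minus_sym L (u _)). lra.
Qed.

Lemma half_pow_small eta : 0 < eta -> exists N, forall j, (N <= j)%coq_nat -> (/2)^j < eta.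
Proof.
move=> He. case: (pow_lt_1_zero (/2) _ eta He) => [|N HN].
{ rewrite Rabs_pos_eq; lra. }
exists N => j Hj. have := HN j Hj. rewrite Rabs_pos_eq //. apply: pow_le; lra.
Qed.

Lemma half_pow_pos j : 0 < (/2)^j.
Proof. apply: pow_lt; lra. Qed.

Lemma half_pow_le j k : (j <= k)%coq_nat -> (/2)^k <= (/2)^j.
Proof.
move=> H. have -> : k = (j + Nat.sub k j)%coq_nat by lia.
elim: (Nat.sub k j) => [|d IH]; first by rewrite Nat.add_0_r; apply: Rle_refl.
rewrite Nat.add_succ_r /=. have := half_pow_pos (j + d)%coq_nat. lra.
Qed.

Lemma vec_cont {m l} (F : vec m -> vec l) x :
  (forall i, cont_at (fun y => F y i) x) ->
  forall eps, 0 < eps -> exists d, 0 < d /\ forall y, vnorm (vsub y x) < d -> vnorm (vsub (F y) (F x)) < eps.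
Proof.
move=> Hc eps He.
have Hl := pos_INR l.
set e' := eps / (INR l + 1).
have He' : 0 < e' by apply: Rdiv_lt_0_compat; lra.
case: (fin_delta_ord l (fun i d => forall y, vnorm (vsub y x) < d -> Rabs (F y i - F x i) < e')).
- move=> i d d' Hd P y Hy; apply: P; lra.
- move=> i; exact: (Hc i e' He').
move=> d [Hd P]; exists d; split => // y Hy.
apply: Rle_lt_trans (vnorm_le_l1 _) _.
apply: Rle_lt_trans (lsum_le _ _ (fun _ => e') _) _.
- move=> i; apply: Rlt_le; exact: P.
- rewrite lsum_const size_enum_ord /e' /Rdiv.
  apply (Rmult_lt_reg_r (INR l + 1)); first lra.
  have -> : INR l * (eps * / (INR l + 1)) * (INR l + 1) = INR l * eps by field; lra.
  nra.
Qed.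

Lemma right_inv {m l} (B : 'I_l -> vec m) :
  (forall u : vec l, exists v : vec m, forall i, mapply B v i = u i) ->
  exists (Rf : vec l -> vec m) KR, 0 < KR /\ (forall u i, mapply B (Rf u) i = u i) /\
     (forall u, vnorm (Rf u) <= KR * vnorm u).
Proof.
move=> Hs.
set e := fun i : 'I_l => (fun j : 'I_l => if j == i then 1 else 0) : vec l.
set vi := fun i => epsilon (inhabits (fun _ : 'I_m => 0)) (fun v => forall j, mapply B v j = e i j).
have Hvi : forall i j, mapply B (vi i) j = e i j.
{ move=> i; rewrite /vi; apply: (epsilon_spec (inhabits (fun _ : 'I_m => 0)) (fun v => forall j, mapply B v j = e i j)); exact: Hs. }
set Rf := fun u : vec l => (fun k : 'I_m => vsum (fun i => u i * vi i k)) : vec m.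
set K0 := vsum (fun k : 'I_m => vsum (fun i : 'I_l => Rabs (vi i k))).
have HK0 : 0 <= K0 by apply: lsum_ge0 => k; apply: lsum_ge0 => i; apply: Rabs_pos.
exists Rf, (K0 + 1); split; first lra. split.
- move=> u j. rewrite /mapply /dot /Rf.
  transitivity (vsum (fun i => u i * dot (B j) (vi i))).
  + rewrite /dot /vsum.
    transitivity (lsum (enum 'I_m) (fun k => lsum (enum 'I_l) (fun i => u i * (B j k * vi i k)))).
    * apply: lsum_ext => k; rewrite -lsum_scal; apply: lsum_ext => i; ring.
    * rewrite lsum_swap; apply: lsum_ext => i; rewrite -lsum_scal //.
  + transitivity (vsum (fun i => u i * (if i == j then 1 else 0))).
    * apply: lsum_ext => i. have := Hvi i j; rewrite /mapply => ->. rewrite /e eq_sym //.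
    * apply: (lsum_delta (enum 'I_l) u j); [apply: enum_uniq | by rewrite mem_enum].
- move=> u. apply: Rle_trans (vnorm_le_l1 _) _.
  have Hu := vnorm_ge0 u.
  apply: (Rle_trans _ (K0 * vnorm u)); last nra.
  rewrite /K0 /vsum -lsum_scalr; apply: lsum_le => k.
  rewrite /Rf. apply: Rle_trans (lsum_abs _ _) _.
  rewrite -lsum_scalr; apply: lsum_le => i.
  rewrite Rabs_mult Rmult_comm; apply: Rmult_le_compat_l; first apply: Rabs_pos.
  apply: coord_le_vnorm.
Qed.
Section Graves.
Context {m l : nat} (Theta : vec m -> Prop) (C : vec l -> Prop) (V : vec m -> Prop)
  (h : vec m -> vec l) (Dh : vec m -> 'I_l -> vec m) (D2h : vec m -> 'I_l -> 'I_m -> vec m)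
  (yb : vec m).
Hypothesis Hh : C2_on V h Dh D2h.
Hypothesis Hred : forall y, V y -> (Theta y <-> C (h y)).

Lemma h_cont y i : V y -> cont_at (fun x => h x i) y.
Proof. move=> Hy; apply: has_grad_cont; exact: ((Hh i).1 y Hy). Qed.

Fixpoint iterY (Rf : vec l -> vec m) (c : vec l) (y0 : vec m) (j : nat) : vec m :=
  match j with
  | O => y0
  | S j => vsub (iterY Rf c y0 j) (Rf (vsub (h (iterY Rf c y0 j)) c))
  end.

Lemma graves_core (B : 'I_l -> vec m) (Rf : vec l -> vec m) (KR r1 K : R) (y0 : vec m) (c : vec l) :
  0 < KR -> (forall u i, mapply B (Rf u) i = u i) -> (forall u, vnorm (Rf u) <= KR * vnorm u) ->
  (forall a b, vnorm (vsub a yb) < r1 -> vnorm (vsub b yb) < r1 ->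
     vnorm (vsub (vsub (h a) (h b)) (mapply B (vsub a b))) <= / (2 * KR) * vnorm (vsub a b)) ->
  (forall y, vnorm (vsub y yb) < r1 -> V y) ->
  K = 2 * (INR m + 1) * KR ->
  C c -> vnorm (vsub y0 yb) + K * vnorm (vsub (h y0) c) < r1 ->
  exists ys, Theta ys /\ vnorm (vsub y0 ys) <= K * vnorm (vsub (h y0) c).
Proof.
move=> HKR HRf HRb Hest HV HK HCc Hsmall.
set r0 := vnorm (vsub (h y0) c) in Hsmall *.
have Hr0 : 0 <= r0 by apply: vnorm_ge0.
have Hm := pos_INR m.
have HKK : 2 * KR <= K by rewrite HK; nra.
have H2K : 0 <= 2 * KR * r0 by apply: Rmult_le_pos; lra.
set Y := iterY Rf c y0.
have Hy0 := vnorm_ge0 (vsub y0 yb).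
have Inv : forall j, vnorm (vsub (Y j) y0) <= 2 * KR * r0 * (1 - (/2)^j) /\
                     vnorm (vsub (h (Y j)) c) <= r0 * (/2)^j.
{ elim => [|j [IH1 IH2]].
  - split.
    + have -> : vsub (Y 0%nat) y0 = (fun _ => 0).
      { apply: functional_extensionality => i; rewrite /Y /= /vsub; ring. }
      rewrite vnorm_zero /=; lra.
    + rewrite /= Rmult_1_r; apply: Rle_refl.
  - have Hp := half_pow_pos j.
    set u := vsub (h (Y j)) c.
    have EY : Y (S j) = vsub (Y j) (Rf u) by [].
    have Hstep : vnorm (vsub (Y (S j)) (Y j)) <= KR * (r0 * (/2)^j).
    { have -> : vsub (Y (S j)) (Y j) = vopp (Rf u).
      { apply: functional_extensionality => i; rewrite EY /vsub /vopp; ring. }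
      rewrite vnorm_opp. apply: Rle_trans (HRb u) _. apply: Rmult_le_compat_l; [lra| exact: IH2]. }
    have H1 : vnorm (vsub (Y (S j)) y0) <= 2 * KR * r0 * (1 - (/2)^(S j)).
    { apply: Rle_trans (vnorm_triang_sub _ (Y j) _) _.
      rewrite /=. nra. }
    split => //.
    have Hin : forall k, vnorm (vsub (Y k) y0) <= 2 * KR * r0 * (1 - (/2)^k) -> vnorm (vsub (Y k) yb) < r1.
    { move=> k Hk. apply: Rle_lt_trans (vnorm_triang_sub _ y0 _) _.
      have Hpk := half_pow_pos k. have : 2 * KR * r0 * (1 - (/2)^k) <= K * r0.
      { have : 2 * KR * r0 * (1 - (/2)^k) <= 2 * KR * r0.
        { have := H2K. nra. }
        nra. }
      lra. }
    have HA := Hin _ H1. have HB := Hin _ IH1.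
    have Hres : vsub (h (Y (S j))) c = vsub (vsub (h (Y (S j))) (h (Y j))) (mapply B (vsub (Y (S j)) (Y j))).
    { apply: functional_extensionality => i.
      have -> : vsub (Y (S j)) (Y j) = vscal (-1) (Rf u).
      { apply: functional_extensionality => k; rewrite EY /vsub /vscal; ring. }
      rewrite /vsub /mapply dot_scalr. have := HRf u i; rewrite /mapply => ->.
      rewrite /u /vsub; ring. }
    rewrite Hres. apply: Rle_trans (Hest _ _ HA HB) _.
    have HiK : 0 < / (2 * KR) by apply: Rinv_0_lt_compat; lra.
    apply: Rle_trans (Rmult_le_compat_l _ _ _ (Rlt_le _ _ HiK) Hstep) _.
    rewrite /=. apply: Req_le. field. lra. }
have Hcau : forall j p, vnorm (vsub (Y (j + p)%coq_nat) (Y j)) <= 2 * KR * r0 * ((/2)^j - (/2)^(j + p)%coq_nat).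
{ move=> j; elim => [|p IH].
  - rewrite Nat.add_0_r. have -> : vsub (Y j) (Y j) = (fun _ => 0).
    { apply: functional_extensionality => i; rewrite /vsub; ring. }
    rewrite vnorm_zero; lra.
  - rewrite Nat.add_succ_r.
    apply: Rle_trans (vnorm_triang_sub _ (Y (j + p)%coq_nat) _) _.
    set u := vsub (h (Y (j + p)%coq_nat)) c.
    have EY : Y (S (j + p)%coq_nat) = vsub (Y (j + p)%coq_nat) (Rf u) by [].
    have : vnorm (vsub (Y (S (j + p)%coq_nat)) (Y (j + p)%coq_nat)) <= KR * (r0 * (/2)^(j + p)%coq_nat).
    { have -> : vsub (Y (S (j + p)%coq_nat)) (Y (j + p)%coq_nat) = vopp (Rf u).
      { apply: functional_extensionality => i; rewrite EY /vsub /vopp; ring. }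
      rewrite vnorm_opp. apply: Rle_trans (HRb u) _. apply: Rmult_le_compat_l; first lra.
      exact: (proj2 (Inv _)). }
    rewrite /=. nra. }
have Hcau2 : forall N p q, (N <= q)%coq_nat -> (q <= p)%coq_nat ->
   vnorm (vsub (Y p) (Y q)) <= 2 * KR * r0 * (/2)^N.
{ move=> N p q H1 H2. have -> : p = (q + Nat.sub p q)%coq_nat by lia.
  apply: Rle_trans (Hcau _ _) _.
  have := half_pow_pos (q + Nat.sub p q)%coq_nat. have := half_pow_le _ _ H1.
  have := H2K. nra. }
have Hcc : forall k, Cauchy_crit (fun j => Y j k).
{ move=> k eps He.
  case: (half_pow_small (eps / (2 * KR * r0 + 1))) => [|N HN].
  { apply: Rdiv_lt_0_compat => //; nra. }
  exists N => p q Hp Hq. rewrite /R_dist.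
  have HNN := HN N (le_n N).
  have Hb : 2 * KR * r0 * (/2)^N < eps.
  { have HpN := half_pow_pos N.
    have := lt_div_mul _ _ (2 * KR * r0 + 1) ltac:(lra) HNN. lra. }
  case: (Nat.le_ge_cases p q) => Hpq.
  - rewrite Rabs_minus_sym. apply: Rle_lt_trans Hb.
    apply: Rle_trans (coord_le_vnorm (vsub (Y q) (Y p)) k) _. exact: Hcau2.
  - apply: Rle_lt_trans Hb.
    apply: Rle_trans (coord_le_vnorm (vsub (Y p) (Y q)) k) _. exact: Hcau2. }
set ys := (fun k => proj1_sig (R_complete _ (Hcc k))) : vec m.
have Hys : forall k, Un_cv (fun j => Y j k) (ys k) by move=> k; exact: (proj2_sig (R_complete _ (Hcc k))).
have Hcomp1 : forall k, Rabs (ys k - y0 k) <= 2 * KR * r0.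
{ move=> k; apply: (lim_bound _ _ _ _ 0%nat (Hys k)) => p _.
  apply: Rle_trans (coord_le_vnorm (vsub (Y p) y0) k) _.
  have := proj1 (Inv p). have := half_pow_pos p. have := H2K. nra. }
have Hcomp2 : forall j k, Rabs (ys k - Y j k) <= 2 * KR * r0 * (/2)^j.
{ move=> j k; apply: (lim_bound _ _ _ _ j (Hys k)) => p Hp.
  apply: Rle_trans (coord_le_vnorm (vsub (Y p) (Y j)) k) _. exact: Hcau2. }
have Hd0 : vnorm (vsub ys y0) <= K * r0.
{ apply: Rle_trans (vnorm_le_l1 _) _.
  apply: Rle_trans (lsum_le _ _ (fun _ => 2 * KR * r0) _) _; first exact: Hcomp1.
  rewrite lsum_const size_enum_ord HK. nra. }
have HVys : V ys.
{ apply: HV. apply: Rle_lt_trans (vnorm_triang_sub _ y0 _) _. lra. }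
exists ys; split; last by rewrite vnorm_sub_sym.
apply/Hred => //.
have -> : h ys = c.
{ apply: functional_extensionality => i.
  apply: NNPP => Hne.
  have Hpos : 0 < Rabs (h ys i - c i) by apply: Rabs_pos_lt => E; apply: Hne; lra.
  set eps := Rabs (h ys i - c i) in Hpos *.
  case: (h_cont ys i HVys (eps / 2)) => [|d [Hd Hdc]]; first lra.
  set T := (INR m + 1) * (2 * KR * r0) + r0 + 1.
  have HT : 0 < T by rewrite /T; nra.
  case: (half_pow_small (Rmin d (eps / 2) / T)) => [|N HN].
  { apply: Rdiv_lt_0_compat => //; apply: Rmin_pos => //; lra. }
  have HNN := HN N (le_n N).
  have HpN := half_pow_pos N.
  have HT2 : T * (/2)^N < Rmin d (eps / 2).
  { exact: (lt_div_mul _ _ _ HT HNN). }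
  have Hm1 := Rmin_l d (eps / 2). have Hm2 := Rmin_r d (eps / 2).
  have Hdist : vnorm (vsub (Y N) ys) < d.
  { apply: Rle_lt_trans (vnorm_le_l1 _) _.
    apply: Rle_lt_trans (lsum_le _ _ (fun _ => 2 * KR * r0 * (/2)^N) _) _.
    - move=> k; rewrite /vsub Rabs_minus_sym; exact: Hcomp2.
    - rewrite lsum_const size_enum_ord. rewrite /T in HT2. nra. }
  have H1 := Hdc _ Hdist.
  have H2 : Rabs (h (Y N) i - c i) < eps / 2.
  { apply: Rle_lt_trans (coord_le_vnorm (vsub (h (Y N)) c) i) _.
    apply: Rle_lt_trans (proj2 (Inv N)) _. rewrite /T in HT2. nra. }
  have := Rabs_triang (h ys i - h (Y N) i) (h (Y N) i - c i).
  have -> : h ys i - h (Y N) i + (h (Y N) i - c i) = h ys i - c i by ring.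
  rewrite Rabs_minus_sym in H1. rewrite /eps in H1 H2 *. lra. }
exact: HCc.
Qed.
End Graves.
Lemma metric_reg {m l : nat} (Theta : vec m -> Prop) (C : vec l -> Prop) (V : vec m -> Prop)
  (h : vec m -> vec l) (Dh : vec m -> 'I_l -> vec m) (D2h : vec m -> 'I_l -> 'I_m -> vec m)
  (yb : vec m) :
  is_open V -> V yb -> C2_on V h Dh D2h -> (forall y, V y -> (Theta y <-> C (h y))) ->
  C (h yb) -> (forall u : vec l, exists v : vec m, forall i, mapply (Dh yb) v i = u i) ->
  exists rho K, 0 < rho /\ 0 < K /\ forall y0, vnorm (vsub y0 yb) < rho ->
     setdist Theta y0 <= K * setdist C (h y0).
Proof.
move=> HVo HVy Hh Hred HCy Hsurj.
have HCne : exists c, C c by exists (h yb).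
have HThne : exists y, Theta y by exists yb; apply/Hred.
case: (HVo yb HVy) => rho0 [Hrho0 HV0].
have HV1 : forall y, vnorm (vsub y yb) < rho0 -> V y by [].
case: (right_inv (Dh yb) Hsurj) => Rf [KR [HKR [HRf HRb]]].
have Hl := pos_INR l. have Hm := pos_INR m.
set beta := / (2 * KR) / (INR l + 1).
have Hbeta : 0 < beta.
{ apply: Rdiv_lt_0_compat; last lra. apply: Rinv_0_lt_compat; lra. }
case: (fin_delta_ord l (fun i r => r <= rho0 /\ forall a b, vnorm (vsub a yb) < r -> vnorm (vsub b yb) < r ->
      Rabs (h a i - h b i - dot (Dh yb i) (vsub a b)) <= beta * vnorm (vsub a b))).
- move=> i d d' Hd [P1 P2]; split; first lra. move=> a b Ha Hb; apply: P2; lra.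
- move=> i.
  case: (mv_est (fun y => h y i) (fun y => Dh y i) yb rho0 Hrho0 _ _ beta Hbeta).
  + move=> y Hy; exact: ((Hh i).1 y (HV0 y Hy)).
  + move=> c; apply: has_grad_cont; exact: ((Hh i).2.1 yb c HVy).
  + move=> r [Hr [Hr0 P]]; exists r; split => //.
move=> r1' [Hr1' HP].
set r1 := Rmin r1' rho0.
have Hr1 : 0 < r1 by apply: Rmin_pos.
have Hr1a : r1 <= r1' := Rmin_l _ _.
have Hr1b : r1 <= rho0 := Rmin_r _ _.
have Hest : forall a b, vnorm (vsub a yb) < r1 -> vnorm (vsub b yb) < r1 ->
     vnorm (vsub (vsub (h a) (h b)) (mapply (Dh yb) (vsub a b))) <= / (2 * KR) * vnorm (vsub a b).
{ move=> a b Ha Hb.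
  apply: Rle_trans (vnorm_le_l1 _) _.
  apply: Rle_trans (lsum_le _ _ (fun _ => beta * vnorm (vsub a b)) _) _.
  - move=> i. apply: (HP i).2; lra.
  - rewrite lsum_const size_enum_ord /beta.
    have Hv := vnorm_ge0 (vsub a b).
    have HiK : 0 < / (2 * KR) by apply: Rinv_0_lt_compat; lra.
    have -> : INR l * (/ (2 * KR) / (INR l + 1) * vnorm (vsub a b))
       = (INR l / (INR l + 1)) * (/ (2 * KR) * vnorm (vsub a b)) by field; lra.
    have : INR l / (INR l + 1) <= 1.
    { apply: (Rmult_le_reg_r (INR l + 1)); first lra.
      have -> : INR l / (INR l + 1) * (INR l + 1) = INR l by field; lra. lra. }
    have : 0 <= / (2 * KR) * vnorm (vsub a b) by nra.
    nra. }
set K := 2 * (INR m + 1) * KR.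
have HK : 0 < K by rewrite /K; nra.
set sigma := r1 / (4 * K + 4).
have Hsig : 0 < sigma by apply: Rdiv_lt_0_compat; lra.
have HsigK : 4 * K * sigma < r1.
{ have : (4 * K + 4) * sigma = r1 by rewrite /sigma; field; lra. nra. }
case: (vec_cont h yb (fun i => h_cont V h Dh D2h Hh yb i HVy) sigma Hsig) => dh [Hdh Hhc].
exists (Rmin (r1 / 2) dh), K; split; first by apply: Rmin_pos; lra.
split => // y0 Hy0.
have Hy0a : vnorm (vsub y0 yb) < r1 / 2 by apply: Rlt_le_trans Hy0 (Rmin_l _ _).
have Hy0b : vnorm (vsub y0 yb) < dh by apply: Rlt_le_trans Hy0 (Rmin_r _ _).
set b := setdist C (h y0).
have Hb0 : 0 <= b by apply: setdist_ge0.
have Hbs : b < sigma.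
{ apply: Rle_lt_trans (setdist_le C HCne _ _ HCy) _. exact: Hhc. }
have Hmain : forall eps, 0 < eps -> eps < sigma -> setdist Theta y0 <= K * (b + eps).
{ move=> eps He Hes.
  case: (setdist_approx C HCne (h y0) eps He) => c [HCc Hc].
  set r0 := vnorm (vsub (h y0) c) in Hc. rewrite -/b in Hc.
  have Hr0 : 0 <= r0 by apply: vnorm_ge0.
  case: (graves_core Theta C V h Dh D2h yb Hh Hred (Dh yb) Rf KR r1 K y0 c HKR HRf HRb Hest _ erefl HCc _).
  - move=> y Hy; apply: HV0; lra.
  - rewrite -/r0. have : K * r0 <= K * (2 * sigma) by apply: Rmult_le_compat_l; lra. lra.
  - move=> ys [Hys Hd].
    apply: Rle_trans (setdist_le Theta HThne _ _ Hys) _.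
    apply: Rle_trans Hd _. apply: Rmult_le_compat_l; rewrite -/r0; lra. }
apply: Rnot_lt_le => Hlt.
set a := setdist Theta y0 in Hlt Hmain.
set eps := Rmin (sigma / 2) ((a - K * b) / (2 * K)).
have He : 0 < eps.
{ apply: Rmin_pos; first lra. apply: Rdiv_lt_0_compat; lra. }
have He1 : eps <= (a - K * b) / (2 * K) := Rmin_r _ _.
have He2 : eps <= sigma / 2 := Rmin_l _ _.
have := Hmain eps He ltac:(lra).
have : K * eps <= (a - K * b) / 2.
{ have -> : (a - K * b) / 2 = K * ((a - K * b) / (2 * K)) by field; lra.
  apply: Rmult_le_compat_l; lra. }
lra.
Qed.
Lemma s_norm {n} (w z : vec n) t : 0 < t <= 1 ->
  vnorm (vadd (vscal t w) (vscal (t * t / 2) z)) <= t * (vnorm w + vnorm z + 1).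
Proof.
move=> Ht. apply: Rle_trans (vnorm_triang _ _) _.
rewrite !vnorm_scal !Rabs_pos_eq; try nra.
have Hw := vnorm_ge0 w; have Hz := vnorm_ge0 z.
have Htt : t * t <= t by nra.
have : t * t * vnorm z <= t * vnorm z by apply: Rmult_le_compat_r.
nra.
Qed.

Lemma quad_pert2 {n} (H : 'I_n -> vec n) t w u W : 0 < t <= 1 ->
  vnorm w <= W -> vnorm u <= t * t * W ->
  Rabs (quad H (vadd (vscal t w) u) - t * t * quad H w) <= 3 * KH H * W * W * (t * t * t).
Proof.
move=> Ht Hw Hu.
apply: Rle_trans (quad_pert H t w u) _.
have HK := KH_ge0 H. have Hw0 := vnorm_ge0 w. have Hu0 := vnorm_ge0 u.
rewrite Rabs_pos_eq; last lra.
have H1 : 2 * t * vnorm w * vnorm u <= 2 * t * W * (t * t * W).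
{ apply: Rmult_le_compat; try nra. }
have H2 : vnorm u * vnorm u <= (t * t * W) * (t * t * W) by apply: Rmult_le_compat; nra.
have H3 : (t * t * W) * (t * t * W) <= W * W * (t * t * t).
{ have : t * t * t * t <= t * t * t by nra. have : 0 <= W * W by nra. nra. }
have : 2 * t * vnorm w * vnorm u + vnorm u * vnorm u <= 3 * W * W * (t * t * t) by nra.
have E : 3 * KH H * W * W * (t * t * t) = KH H * (3 * W * W * (t * t * t)) by ring.
rewrite E. apply: Rmult_le_compat_l => //.
Qed.
Theorem lemma4p4
  (n m l : nat)
  (g : vec n -> R) (Dg : vec n -> vec n) (D2g : vec n -> 'I_n -> vec n)
  (q : vec n -> vec m) (Dq : vec n -> 'I_m -> vec n) (D2q : vec n -> 'I_m -> 'I_n -> vec n)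
  (Theta : vec m -> Prop) (C : vec l -> Prop) (V : vec m -> Prop)
  (h : vec m -> vec l) (Dh : vec m -> 'I_l -> vec m) (D2h : vec m -> 'I_l -> 'I_m -> vec m)
  (DQ : vec n -> 'I_l -> vec n) (D2Q : vec n -> 'I_l -> 'I_n -> vec n)
  (xbar : vec n)
  (* standing assumptions *)
  (Hg : C2_scalar_on (fun _ => True) g Dg D2g)
  (Hq : C2_on (fun _ => True) q Dq D2q)
  (HTheta_ne : exists y, Theta y)
  (HTheta_cl : is_closed Theta)
  (HTheta_cv : is_convex Theta)
  (HC_cl : is_closed C) (HC_cv : is_convex C) (HC_cone : is_cone C) (HC_pt : is_pointed C)
  (HV_open : is_open V) (HV_ybar : V (q xbar))
  (Hh : C2_on V h Dh D2h)
  (Hh0 : forall i, h (q xbar) i = 0)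
  (Hh_surj : forall u : vec l, exists v : vec m, forall i, mapply (Dh (q xbar)) v i = u i)
  (Hred : forall y, V y -> (Theta y <-> C (h y)))
  (* Q := h o q on q^{-1}(V), with gradient DQ and Hessians D2Q *)
  (HQ : C2_on (fun x => V (q x)) (fun x => h (q x)) DQ D2Q)
  (* xbar is a local minimizer of (P) *)
  (Hfeas : Theta (q xbar))
  (Hmin : exists eps, 0 < eps /\
     forall x, Theta (q x) -> vnorm (vsub x xbar) < eps -> g xbar <= g x)
  (* MSCQ at xbar *)
  (Hmscq : exists kappa U, 0 < kappa /\ nbhd xbar U /\
     forall x, U x -> setdist (fun x' => Theta (q x')) x <= kappa * setdist Theta (q x)) :
  forall (w z : vec n),
    contingent_cone (fun x => Theta (q x)) xbar w ->
    dot (Dg xbar) w = 0 ->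
    outer_second_tangent C (h (q xbar)) (mapply (DQ xbar) w)
      (vadd (mapply (DQ xbar) z) (fun j => quad (D2Q xbar j) w)) ->
    dot (Dg xbar) z + quad (D2g xbar) w >= 0.
Proof.
move=> w z Hcone Hgw HT2.
apply: Rnot_lt_ge => HL.
set L := dot (Dg xbar) z + quad (D2g xbar) w in HL.
set eta := - L.
have Heta : 0 < eta by rewrite /eta; lra.
set yb := q xbar.
have HCyb : C (h yb) by apply/Hred.
have HGne : exists x, Theta (q x) by exists xbar.
case: (metric_reg Theta C V h Dh D2h yb HV_open HV_ybar Hh Hred HCyb Hh_surj) => rhoG [KG [HrhoG [HKG Hmr]]].
case: Hmscq => kappa [U [Hkappa [[epsU [HepsU HU]] Hms]]].
case: Hmin => epsm [Hepsm Hm].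
case: (HV_open yb HV_ybar) => rhoV [HrhoV HVb].
have Hqc : forall i, cont_at (fun x => q x i) xbar.
{ move=> i; apply: has_grad_cont; exact: ((Hq i).1 xbar I). }
case: (vec_cont q xbar Hqc (Rmin rhoV rhoG) ltac:(by apply: Rmin_pos)) => dq [Hdq Hdqc].
have HqV : forall x, vnorm (vsub x xbar) < dq -> V (q x).
{ move=> x Hx; apply: HVb. apply: Rlt_le_trans (Hdqc x Hx) (Rmin_l _ _). }
have HqG : forall x, vnorm (vsub x xbar) < dq -> vnorm (vsub (q x) yb) < rhoG.
{ move=> x Hx; apply: Rlt_le_trans (Hdqc x Hx) (Rmin_r _ _). }
set W := vnorm w + vnorm z + 1.
have HW : 1 <= W by rewrite /W; have := vnorm_ge0 w; have := vnorm_ge0 z; lra.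
set G := vnorm (Dg xbar).
have HG : 0 <= G by apply: vnorm_ge0.
set KHg := KH (D2g xbar).
have HKHg : 0 <= KHg by apply: KH_ge0.
set KQ := vsum (fun j => KH (D2Q xbar j)).
have HKQ : 0 <= KQ by apply: lsum_ge0 => j; apply: KH_ge0.
have HKQj : forall j, KH (D2Q xbar j) <= KQ.
{ move=> j; apply: (lsum_mem_le _ (fun j => KH (D2Q xbar j))); first by move=> i; apply: KH_ge0.
  by rewrite mem_enum. }
set A := kappa * KG.
have HA : 0 < A by rewrite /A; nra.
have Hl := pos_INR l.
set E := Rmin 1 (eta / (16 * (G + 1))).
have HE : 0 < E by apply: Rmin_pos; [lra| apply: Rdiv_lt_0_compat; lra].
have HE1 : E <= 1 := Rmin_l _ _.
have HE2 : E <= eta / (16 * (G + 1)) := Rmin_r _ _.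
set eps1 := E / (6 * A).
have Heps1 : 0 < eps1 by apply: Rdiv_lt_0_compat; lra.
set eps2 := E / (6 * A * (INR l + 1) * W * W).
have Heps2 : 0 < eps2 by apply: Rdiv_lt_0_compat; repeat apply: Rmult_lt_0_compat; lra.
set eps3 := eta / (64 * W * W).
have Heps3 : 0 < eps3 by apply: Rdiv_lt_0_compat; repeat apply: Rmult_lt_0_compat; lra.
case: (taylor2 g Dg (D2g xbar) xbar 1 Rlt_0_1 (fun y _ => Hg.1 y I) (fun a => Hg.2.1 xbar a I) eps3 Heps3)
  => d3 [Hd3 Htg].
case: (fin_delta_ord l (fun j d => forall s, vnorm s < d ->
    Rabs (h (q (vadd xbar s)) j - h (q xbar) j - dot (DQ xbar j) s - / 2 * quad (D2Q xbar j) s)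
      <= eps2 * (vnorm s * vnorm s))).
- move=> j d d' Hd P s Hs; apply: P; lra.
- move=> j.
  exact: (taylor2 (fun x => h (q x) j) (fun x => DQ x j) (D2Q xbar j) xbar dq Hdq
     (fun y Hy => (HQ j).1 y (HqV y Hy)) (fun a => (HQ j).2.1 xbar a HV_ybar) eps2 Heps2).
move=> d2 [Hd2 HtQ].
set D := Rmin (Rmin d2 (d3 / 2)) (Rmin dq (Rmin epsU (epsm / 2))).
have HD : 0 < D.
{ repeat apply: Rmin_pos; lra. }
have HD1 : D <= d2 /\ D <= d3 / 2 /\ D <= dq /\ D <= epsU /\ D <= epsm / 2.
{ rewrite /D.
  have := Rmin_l (Rmin d2 (d3 / 2)) (Rmin dq (Rmin epsU (epsm / 2))).
  have := Rmin_r (Rmin d2 (d3 / 2)) (Rmin dq (Rmin epsU (epsm / 2))).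
  have := Rmin_l d2 (d3 / 2). have := Rmin_r d2 (d3 / 2).
  have := Rmin_l dq (Rmin epsU (epsm / 2)). have := Rmin_r dq (Rmin epsU (epsm / 2)).
  have := Rmin_l epsU (epsm / 2). have := Rmin_r epsU (epsm / 2). lra. }
case: HD1 => HD1 [HD2 [HD3 [HD4 HD5]]].
set c1 := 3 * KHg * W * W / 2.
have Hc1 : 0 <= c1.
{ rewrite /c1; have : 0 <= KHg * (W * W) by apply: Rmult_le_pos; nra. lra. }
set c2 := (INR l + 1) * (3 / 2 * KQ * W * W).
have Hc2 : 0 <= c2.
{ rewrite /c2; have : 0 <= KQ * (W * W) by apply: Rmult_le_pos; nra.
  move=> ?; apply: Rmult_le_pos; lra. }
set tau := Rmin (Rmin 1 (D / W)) (Rmin (eta / (16 * (c1 + 1))) (E / (6 * A * (c2 + 1)))).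
have Htau : 0 < tau.
{ repeat apply: Rmin_pos; try lra; apply: Rdiv_lt_0_compat; try lra;
  repeat apply: Rmult_lt_0_compat; lra. }
have Htau1 : tau <= 1 /\ tau <= D / W /\ tau <= eta / (16 * (c1 + 1)) /\ tau <= E / (6 * A * (c2 + 1)).
{ rewrite /tau.
  have := Rmin_l (Rmin 1 (D / W)) (Rmin (eta / (16 * (c1 + 1))) (E / (6 * A * (c2 + 1)))).
  have := Rmin_r (Rmin 1 (D / W)) (Rmin (eta / (16 * (c1 + 1))) (E / (6 * A * (c2 + 1)))).
  have := Rmin_l 1 (D / W). have := Rmin_r 1 (D / W).
  have := Rmin_l (eta / (16 * (c1 + 1))) (E / (6 * A * (c2 + 1))).
  have := Rmin_r (eta / (16 * (c1 + 1))) (E / (6 * A * (c2 + 1))). lra. }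
case: Htau1 => Htau1 [Htau2 [Htau3 Htau4]].
case: HT2 => tt [Htpos [Httcv Hratio]].
case: (Hratio eps1 Heps1) => N1 HN1.
case: (Httcv tau Htau) => N2 HN2.
set k := Nat.max N1 N2.
have Hk1 := HN1 k ltac:(rewrite /k; lia).
have Hk2 := HN2 k ltac:(rewrite /k; lia).
set t := tt k in Hk1 Hk2.
have Ht0 : 0 < t := Htpos k.
have Htt : t < tau by move: Hk2; rewrite /Rdist Rminus_0_r Rabs_pos_eq; lra.
have Ht1 : 0 < t <= 1 by lra.
have Ht2 : t ^ 2 = t * t by simpl; ring.
have HtW : t * W < D.
{ have : t < D / W by lra. move=> H. have := lt_div_mul _ _ W ltac:(lra) H. lra. }
have Htc1 : c1 * t <= eta / 16.
{ have : t * (16 * (c1 + 1)) <= eta.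
  { have : t < eta / (16 * (c1 + 1)) by lra. move=> H.
    have := lt_div_mul _ _ (16 * (c1 + 1)) ltac:(lra) H. lra. }
  nra. }
have Htc2 : A * c2 * t <= E / 6.
{ have : t * (6 * A * (c2 + 1)) <= E.
  { have : t < E / (6 * A * (c2 + 1)) by lra. move=> H.
    have := lt_div_mul _ _ (6 * A * (c2 + 1)) ltac:(repeat apply: Rmult_lt_0_compat; lra) H. lra. }
  nra. }
set a := mapply (DQ xbar) w.
set v := vadd (mapply (DQ xbar) z) (fun j => quad (D2Q xbar j) w).
set Pt := vadd (vadd (h (q xbar)) (vscal t a)) (vscal (/ 2 * t ^ 2) v).
have HdPt : setdist C Pt <= eps1 * (t * t).
{ move: Hk1; rewrite /Rdist Rminus_0_r -/Pt => H.
  have Hp : 0 < t ^ 2 by apply: pow_lt.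
  have := Rle_abs (setdist C Pt / t ^ 2) => H2.
  have H3 : setdist C Pt / t ^ 2 < eps1 by lra.
  have := div_lt_mul _ _ _ Hp H3 => H4. rewrite -Ht2. lra. }
set s := vadd (vscal t w) (vscal (t * t / 2) z).
have Hs : vnorm s <= t * W by apply: s_norm.
set xk := vadd xbar s.
have Exk : vsub xk xbar = s by apply: functional_extensionality => i; rewrite /xk /vsub /vadd; ring.
have Hxk : vnorm (vsub xk xbar) < D by rewrite Exk; lra.
have HQj : forall j, Rabs (h (q xk) j - Pt j) <= eps2 * W * W * (t * t) + 3 / 2 * KQ * W * W * (t * t * t).
{ move=> j.
  have H1 := HtQ j s ltac:(lra).
  have Hu : vnorm (vscal (t * t / 2) z) <= t * t * W.
  { rewrite vnorm_scal Rabs_pos_eq; last nra. have := vnorm_ge0 z. have := vnorm_ge0 w.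
    rewrite /W. nra. }
  have H2 := quad_pert2 (D2Q xbar j) t w (vscal (t * t / 2) z) W Ht1 ltac:(rewrite /W; have := vnorm_ge0 z; lra) Hu.
  have Hdot : dot (DQ xbar j) s = t * a j + t * t / 2 * dot (DQ xbar j) z.
  { rewrite /s dot_addr !dot_scalr /a /mapply //. }
  have EPt : Pt j = h (q xbar) j + t * a j + / 2 * t ^ 2 * (dot (DQ xbar j) z + quad (D2Q xbar j) w).
  { by rewrite /Pt /vadd /vscal /v /mapply. }
  have Hss : vnorm s * vnorm s <= W * W * (t * t).
  { have := vnorm_ge0 s. nra. }
  have HKj := HKQj j.
  have Hkk : 3 * KH (D2Q xbar j) * W * W * (t * t * t) <= 3 * KQ * W * W * (t * t * t).
  { have : 0 <= W * W * (t * t * t) by apply: Rmult_le_pos; nra. nra. }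
  have E1 : h (q xk) j - Pt j =
     (h (q (vadd xbar s)) j - h (q xbar) j - dot (DQ xbar j) s - / 2 * quad (D2Q xbar j) s)
     + / 2 * (quad (D2Q xbar j) (vadd (vscal t w) (vscal (t * t / 2) z)) - t * t * quad (D2Q xbar j) w).
  { rewrite EPt Hdot /xk /s Ht2. field. }
  rewrite E1. apply: Rle_trans (Rabs_triang _ _) _.
  rewrite Rabs_mult (Rabs_pos_eq (/2)); last lra.
  have : eps2 * (vnorm s * vnorm s) <= eps2 * W * W * (t * t).
  { have -> : eps2 * W * W * (t * t) = eps2 * (W * W * (t * t)) by ring.
    apply: Rmult_le_compat_l; lra. }
  lra. }
have HQv : vnorm (vsub (h (q xk)) Pt) <= INR l * (eps2 * W * W * (t * t) + 3 / 2 * KQ * W * W * (t * t * t)).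
{ apply: Rle_trans (vnorm_le_l1 _) _.
  apply: Rle_trans (lsum_le _ _ (fun _ => eps2 * W * W * (t * t) + 3 / 2 * KQ * W * W * (t * t * t)) _) _.
  - move=> j; exact: HQj.
  - rewrite lsum_const size_enum_ord; lra. }
have HCne : exists c, C c by exists (h yb).
have HdC : setdist C (h (q xk)) <= eps1 * (t * t) + INR l * (eps2 * W * W * (t * t) + 3 / 2 * KQ * W * W * (t * t * t)).
{ apply: Rle_trans (setdist_lip C HCne _ Pt) _. lra. }
have HdTh : setdist Theta (q xk) <= KG * setdist C (h (q xk)).
{ apply: Hmr. apply: HqG. lra. }
have HdG : setdist (fun x' => Theta (q x')) xk <= kappa * setdist Theta (q xk).
{ apply: Hms. apply: HU. lra. }
have HdGa : setdist (fun x' => Theta (q x')) xk <= E / 2 * (t * t).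
{ have HWp : 0 < W by lra.
  have e1 : A * eps1 = E / 6 by rewrite /eps1; field; lra.
  have e2 : A * (INR l * (eps2 * W * W)) <= E / 6.
  { have -> : A * (INR l * (eps2 * W * W)) = E / 6 * (INR l / (INR l + 1)).
    { rewrite /eps2; field; split; lra. }
    have : INR l / (INR l + 1) <= 1.
    { apply: (Rmult_le_reg_r (INR l + 1)); first lra.
      have -> : INR l / (INR l + 1) * (INR l + 1) = INR l by field; lra. lra. }
    have : 0 <= INR l / (INR l + 1) by rewrite /Rdiv; apply: Rle_mult_inv_pos; lra.
    nra. }
  have e3 : A * (INR l * (3 / 2 * KQ * W * W)) <= A * c2.
  { apply: Rmult_le_compat_l; first lra. rewrite /c2.
    have HQW : 0 <= KQ * (W * W) by apply: Rmult_le_pos; nra.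
    have : 0 <= 3 / 2 * KQ * W * W by lra.
    nra. }
  have Htt0 : 0 <= t * t by nra.
  have Hbound : setdist (fun x' => Theta (q x')) xk <=
     A * (eps1 * (t * t) + INR l * (eps2 * W * W * (t * t) + 3 / 2 * KQ * W * W * (t * t * t))).
  { apply: Rle_trans HdG _. rewrite /A Rmult_assoc. apply: Rmult_le_compat_l; first lra.
    apply: Rle_trans HdTh _. apply: Rmult_le_compat_l; [lra| exact: HdC]. }
  apply: Rle_trans Hbound _.
  have -> : A * (eps1 * (t * t) + INR l * (eps2 * W * W * (t * t) + 3 / 2 * KQ * W * W * (t * t * t)))
    = (A * eps1) * (t * t) + (A * (INR l * (eps2 * W * W))) * (t * t)
      + (A * (INR l * (3 / 2 * KQ * W * W))) * t * (t * t) by ring.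
  rewrite e1.
  have H2 := Rmult_le_compat_r _ _ _ Htt0 e2.
  have H3 : A * (INR l * (3 / 2 * KQ * W * W)) * t <= E / 6.
  { apply: Rle_trans Htc2. apply: Rmult_le_compat_r; lra. }
  have H4 := Rmult_le_compat_r _ _ _ Htt0 H3.
  lra. }
have Htt0 : 0 < t * t by nra.
case: (setdist_approx _ HGne xk (E / 2 * (t * t)) ltac:(nra)) => x' [Hx' Hdx'].
set e := vsub x' xk.
have He : vnorm e < E * (t * t) by rewrite /e vnorm_sub_sym; lra.
set u' := vadd (vscal (t * t / 2) z) e.
set s' := vadd (vscal t w) u'.
have Ex' : x' = vadd xbar s'.
{ apply: functional_extensionality => i; rewrite /s' /u' /e /xk /s /vadd /vsub /vscal. ring. }
have Hw0 := vnorm_ge0 w. have Hz0 := vnorm_ge0 z.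
have Hu' : vnorm u' <= t * t * W.
{ apply: Rle_trans (vnorm_triang _ _) _.
  rewrite vnorm_scal Rabs_pos_eq; last nra.
  have : E * (t * t) <= 1 * (t * t) by apply: Rmult_le_compat_r; lra.
  rewrite /W. nra. }
have Hs' : vnorm s' <= 2 * t * W.
{ apply: Rle_trans (vnorm_triang _ _) _.
  rewrite vnorm_scal Rabs_pos_eq; last lra.
  have Htt1 : t * t <= t by nra.
  have : t * t * W <= t * W by apply: Rmult_le_compat_r; lra.
  have : t * vnorm w <= t * W by apply: Rmult_le_compat_l; rewrite /W; lra.
  lra. }
have Hs'0 := vnorm_ge0 s'.
have Hgmin : g xbar <= g x'.
{ apply: Hm => //. rewrite Ex'.
  have -> : vsub (vadd xbar s') xbar = s' by apply: functional_extensionality => i; rewrite /vsub /vadd; ring.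
  lra. }
have Hty := Htg s' ltac:(lra).
rewrite -Ex' in Hty.
have Hdot : dot (Dg xbar) s' = t * t / 2 * dot (Dg xbar) z + dot (Dg xbar) e.
{ rewrite /s' /u' !dot_addr !dot_scalr Hgw. ring. }
have Hde : Rabs (dot (Dg xbar) e) <= eta / 16 * (t * t).
{ apply: Rle_trans (cauchy_schwarz _ _) _. rewrite -/G.
  have H1 : G * vnorm e <= G * (E * (t * t)) by apply: Rmult_le_compat_l; lra.
  have H2 : G * E <= eta / 16.
  { have : (G + 1) * E <= eta / 16.
    { have -> : eta / 16 = (G + 1) * (eta / (16 * (G + 1))) by field; lra.
      apply: Rmult_le_compat_l; lra. }
    nra. }
  have := Rmult_le_compat_r _ _ _ (Rlt_le _ _ Htt0) H2. nra. }
have Hqd := quad_pert2 (D2g xbar) t w u' W Ht1 ltac:(rewrite /W; lra) Hu'.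
rewrite -/KHg in Hqd.
have Hqd2 : / 2 * Rabs (quad (D2g xbar) s' - t * t * quad (D2g xbar) w) <= eta / 16 * (t * t).
{ apply: Rle_trans (Rmult_le_compat_l _ _ _ _ Hqd) _; first lra.
  have -> : / 2 * (3 * KHg * W * W * (t * t * t)) = (c1 * t) * (t * t) by rewrite /c1; field.
  apply: Rmult_le_compat_r; lra. }
have He3 : eps3 * (vnorm s' * vnorm s') <= eta / 16 * (t * t).
{ have : vnorm s' * vnorm s' <= 4 * W * W * (t * t) by nra.
  move=> H. apply: Rle_trans (Rmult_le_compat_l _ _ _ (Rlt_le _ _ Heps3) H) _.
  have -> : eps3 * (4 * W * W * (t * t)) = eta / 16 * (t * t) by rewrite /eps3; field; lra.
  lra. }
have HLe : L = - eta by rewrite /eta; ring.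
have := Rle_abs (g x' - g xbar - dot (Dg xbar) s' - / 2 * quad (D2g xbar) s').
have := Rle_abs (quad (D2g xbar) s' - t * t * quad (D2g xbar) w).
have := Rle_abs (dot (Dg xbar) e).
rewrite Hdot. rewrite Hdot in Hty. rewrite /L in HLe.
have Hkey : t * t / 2 * dot (Dg xbar) z + / 2 * (t * t * quad (D2g xbar) w) = - (eta * (t * t)) / 2.
{ have HLe2 : eta = - (dot (Dg xbar) z + quad (D2g xbar) w) by rewrite /eta /L.
  rewrite HLe2. field. }
have Hpos : 0 < eta * (t * t) by nra.
move=> *. lra.
Qed.
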